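(* Let $S_4=\mathbb{C}P^1\setminus\{p_1,\dots,p_4\}$ with base point $s_0$ and loops $\gamma_1,\dots,\gamma_4$ around the punctures satisfying $\gamma_4\gamma_3\gamma_2\gamma_1=1$. Let $$g_{0,2}=\begin{pmatrix} -\tfrac{1}{2}\sqrt{1+\sqrt{5}-\sqrt{2(1+\sqrt{5})}}& \left( -\sqrt{1+\sqrt{5}-\sqrt{2(1+\sqrt{5})}}\right)^{-1} \\ \tfrac{1}{2}\sqrt{1+\sqrt{5}-\sqrt{2(1+\sqrt{5})}}& \left(-\sqrt{1+\sqrt{5}-\sqrt{2(1+\sqrt{5})}}\right)^{-1}\end{pmatrix},\quad j_0=\frac{1}{\sqrt2}\begin{pmatrix}1&-1\\1&1\end{pmatrix},$$ $J_1=-(g_{0,2})^2$, and $J_{k+1}=j_0J_kj_0^{-1}$ for $k=1,2,3$ (so that $J_4J_3J_2J_1=\mathrm{Id}$). Then the representation $\rho\colon\pi_1(S_4,s_0)\to\mathrm{SL}(2,\mathbb{C})$, $\rho(\gamma_k)=J_k$, is a genus $4$ RSR-representation whose image is contained in the cocompact lattice $\Gamma\subset\mathrm{SL}(2,\mathbb{C})$.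
   Context: Let $\mathbb{T}\subset\mathbb{H}^3$ be the hyperbolic tetrahedron with dihedral angles $\tfrac{\pi}{2},\tfrac{\pi}{2},\tfrac{\pi}{2},\tfrac{\pi}{5},\tfrac{\pi}{3},\tfrac{\pi}{4}$ (the characteristic cell of the order-4 dodecahedral honeycomb $\{5,3,4\}$), let $\mathfrak G$ be the index-2 orientation-preserving subgroup of the Coxeter group generated by the reflections in its faces, and let $\Gamma\subset\mathrm{SL}(2,\mathbb{C})$ be the preimage of $\mathfrak G$ under the double cover $\mathrm{SL}(2,\mathbb{C})\to\mathrm{SO}(3,1)$; $\Gamma$ is a cocompact lattice and $g_{0,2}\in\Gamma$ is a lift of the product of two face reflections. An irreducible representation $\rho$ of $\pi_1(S_4,s_0)$ with $M_j=\rho(\gamma_j)$ is called RSR if: (Real) it takes values in $\mathrm{SL}(2,\mathbb{R})$ and $\mathrm{tr}(M_1M_2),\mathrm{tr}(M_2M_3),\mathrm{tr}(M_1M_3)<-2$; (Symmetric) all $M_j$ lie in the conjugacy class of $\mathrm{diag}(e^{2\pi i\tilde r},e^{-2\pi i\tilde r})$ for some $\tilde r\in(\tfrac14,\tfrac12)$; (Rectangular) $\mathrm{tr}(M_1M_3)=\mathrm{tr}(M_2M_4)$. If the $M_j$ have order $k$, the genus of $\rho$ is $k-1$ for $k$ odd and $\tfrac k2-1$ for $k$ even. *)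

(* Defs.v *)
From HB Require Import structures.
From mathcomp Require Import all_boot all_order all_algebra.
From mathcomp Require Import reals trigo complex.
Set Implicit Arguments. Unset Strict Implicit. Unset Printing Implicit Defensive.
Import Order.TTheory GRing.Theory Num.Theory.
Local Open Scope ring_scope.
Local Open Scope complex_scope.

Section Defs.
Variable R : realType.
Local Notation C := R[i].

Definition mx2 (a b c d : C) : 'M[C]_2 :=
  \matrix_(i < 2, j < 2)
    if (i == 0 :> nat) then (if (j == 0 :> nat) then a else b)
    else (if (j == 0 :> nat) then c else d).

Definition adjm (A : 'M[C]_2) : 'M[C]_2 := map_mx (fun z : C => z^*) A^T.
Definition hermitian (X : 'M[C]_2) : Prop := adjm X = X.

Definition s_val : R :=
  Num.sqrt (1 + Num.sqrt 5 - Num.sqrt (2 * (1 + Num.sqrt 5))).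

Definition g02 : 'M[C]_2 :=
  mx2 (- (s_val / 2))%:C ((- s_val)^-1)%:C (s_val / 2)%:C ((- s_val)^-1)%:C.

Definition j0 : 'M[C]_2 := ((Num.sqrt 2)^-1)%:C *: mx2 1 (-1) 1 1.

(* J 1 = -(g02)^2, J (k+1) = j0 J k j0^-1 ; paper indices k = 1..4 *)
Definition Jmat (k : nat) : 'M[C]_2 :=
  iter k.-1 (fun M => j0 *m M *m invmx j0) (- (g02 *m g02)).

Definition idx4 (k : nat) : bool := (1 <= k <= 4)%N.

Definition irreducible4 (M : nat -> 'M[C]_2) : Prop :=
  ~ exists v : 'cV[C]_2, v != 0 /\
      forall k, idx4 k -> exists l : C, M k *m v = l *: v.

Definition real_mx (A : 'M[C]_2) : Prop := forall i j, Im (A i j) = 0.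

Definition RSR_real (M : nat -> 'M[C]_2) : Prop :=
  (forall k, idx4 k -> real_mx (M k) /\ \det (M k) = 1) /\
  \tr (M 1 *m M 2) < -2 /\ \tr (M 2 *m M 3) < -2 /\ \tr (M 1 *m M 3) < -2.

Definition expi (t : R) : C := cos t +i* sin t.

Definition RSR_symmetric (M : nat -> 'M[C]_2) : Prop :=
  exists r : R, 1/4 < r < 1/2 /\
    forall k, idx4 k -> exists P : 'M[C]_2, \det P = 1 /\
      M k = P *m mx2 (expi (2 * pi * r)) 0 0 (expi (- (2 * pi * r))) *m invmx P.

Definition RSR_rectangular (M : nat -> 'M[C]_2) : Prop :=
  \tr (M 1 *m M 3) = \tr (M 2 *m M 4).

Definition RSR (M : nat -> 'M[C]_2) : Prop :=
  irreducible4 M /\ RSR_real M /\ RSR_symmetric M /\ RSR_rectangular M.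

Definition mx_order (A : 'M[C]_2) (k : nat) : Prop :=
  (0 < k)%N /\ A ^+ k = 1 /\ forall m, (0 < m < k)%N -> A ^+ m != 1.

Definition genus_of_order (k : nat) : nat :=
  if odd k then k.-1 else (k./2).-1.

Definition has_genus (M : nat -> 'M[C]_2) (g : nat) : Prop :=
  exists k, (forall j, idx4 j -> mx_order (M j) k) /\ genus_of_order k = g.

(* ---- hyperbolic geometry in the Hermitian-matrix model ----
   H^3 = {X hermitian, det X = 1, X > 0}; the Minkowski form is the
   polarization of det (signature (+,-,-,-)); A in SL(2,C) acts by X |-> A X A^*. *)
Definition mform (X Y : 'M[C]_2) : C := (\det (X + Y) - \det X - \det Y) / 2.

Definition mrefl (n X : 'M[C]_2) : 'M[C]_2 := X - (2 * mform X n / mform n n) *: n.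

(* Coxeter exponents of the characteristic tetrahedron of {5,3,4}:
   linear diagram 0 -5- 1 -3- 2 -4- 3, all other pairs right angles *)
Definition cox_m (i j : 'I_4) : nat :=
  let a := minn i j in let b := maxn i j in
  if (a == 0) && (b == 1) then 5 else
  if (a == 1) && (b == 2) then 3 else
  if (a == 2) && (b == 3) then 4 else 2.

(* n i : unit (det = -1) outward normals of the faces of a hyperbolic tetrahedron
   with dihedral angle pi / cox_m i j between faces i and j *)
Definition tetra_normals (n : 'I_4 -> 'M[C]_2) : Prop :=
  (forall i, hermitian (n i) /\ \det (n i) = -1) /\
  (forall i j, i != j -> mform (n i) (n j) = (cos (pi / (cox_m i j)%:R))%:C).

(* the map f on hermitian matrices lies in the orientation preserving subgroup
   (even-length words) of the Coxeter group generated by the face reflections *)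
Definition in_rot_coxeter (n : 'I_4 -> 'M[C]_2) (f : 'M[C]_2 -> 'M[C]_2) : Prop :=
  exists w : seq 'I_4, ~~ odd (size w) /\
    forall X, hermitian X -> f X = foldr (fun i Y => mrefl (n i) Y) X w.

Definition in_Gamma (n : 'I_4 -> 'M[C]_2) (A : 'M[C]_2) : Prop :=
  \det A = 1 /\ in_rot_coxeter n (fun X => A *m X *m adjm A).

Definition lift_of_two_reflections (n : 'I_4 -> 'M[C]_2) (A : 'M[C]_2) : Prop :=
  \det A = 1 /\ exists a b : 'I_4, a != b /\
    forall X, hermitian X -> A *m X *m adjm A = mrefl (n a) (mrefl (n b) X).

End Defs.

(* Main.v *)
Require Import Defs.
From HB Require Import structures.
From mathcomp Require Import all_boot all_order all_algebra.
From mathcomp Require Import reals trigo complex.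
From mathcomp Require Import ring lra.
Import Order.TTheory GRing.Theory Num.Theory.
Local Open Scope ring_scope.
Local Open Scope complex_scope.

Section M2.
Variable R : realType.
Local Notation C := R[i].
Implicit Types a b c d e f g h : C.

Lemma big_ord2 (F : 'I_2 -> C) : \sum_(i < 2) F i = F 0 + F 1.
Proof. rewrite !big_ord_recl big_ord0 addr0; congr (F _ + F _); exact: val_inj. Qed.

Lemma mx2P a b c d e f g h : a = e -> b = f -> c = g -> d = h -> mx2 a b c d = mx2 e f g h.
Proof. by move=> -> -> -> ->. Qed.

Lemma mx2_00 a b c d : mx2 a b c d 0 0 = a. Proof. by rewrite /mx2 mxE. Qed.
Lemma mx2_01 a b c d : mx2 a b c d 0 1 = b. Proof. by rewrite /mx2 mxE. Qed.
Lemma mx2_10 a b c d : mx2 a b c d 1 0 = c. Proof. by rewrite /mx2 mxE. Qed.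
Lemma mx2_11 a b c d : mx2 a b c d 1 1 = d. Proof. by rewrite /mx2 mxE. Qed.

Lemma mx2_eta (A : 'M[C]_2) : A = mx2 (A 0 0) (A 0 1) (A 1 0) (A 1 1).
Proof.
apply/matrixP => i j; rewrite /mx2 mxE.
by case: i => [[|[|]]] // ? ; case: j => [[|[|]]] // ? /=; congr (A _ _); apply: val_inj.
Qed.

Lemma mulmx2 a b c d e f g h :
  mx2 a b c d *m mx2 e f g h = mx2 (a*e + b*g) (a*f + b*h) (c*e + d*g) (c*f + d*h).
Proof.
apply/matrixP => i j; rewrite !mxE big_ord2 !mxE /=.
by case: i => [[|[|]]] // ? ; case: j => [[|[|]]] // ? /=.
Qed.

Lemma mulr2x a b c d e f g h :
  mx2 a b c d * mx2 e f g h = mx2 (a*e + b*g) (a*f + b*h) (c*e + d*g) (c*f + d*h).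
Proof. exact: mulmx2. Qed.

Lemma det_mx2 a b c d : \det (mx2 a b c d) = a * d - b * c.
Proof.
rewrite (expand_det_row _ 0) big_ord2 /cofactor !det_mx11 !mxE /=.
rewrite /bump /=. 
have -> : (0 + 1 %% 2 = 1)%N by [].
rewrite addn0 expr0 expr1; ring.
Qed.

Lemma tr_mx2 a b c d : \tr (mx2 a b c d) = a + d.
Proof. by rewrite /mxtrace big_ord2 mx2_00 mx2_11. Qed.

Lemma scale_mx2 k a b c d : k *: mx2 a b c d = mx2 (k*a) (k*b) (k*c) (k*d).
Proof.
apply/matrixP => i j; rewrite !mxE.
by case: i => [[|[|]]] // ? ; case: j => [[|[|]]] // ? /=.
Qed.

Lemma opp_mx2 a b c d : - mx2 a b c d = mx2 (-a) (-b) (-c) (-d).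
Proof.
apply/matrixP => i j; rewrite !mxE.
by case: i => [[|[|]]] // ? ; case: j => [[|[|]]] // ? /=.
Qed.

Lemma add_mx2 a b c d e f g h : mx2 a b c d + mx2 e f g h = mx2 (a+e) (b+f) (c+g) (d+h).
Proof.
apply/matrixP => i j; rewrite !mxE.
by case: i => [[|[|]]] // ? ; case: j => [[|[|]]] // ? /=.
Qed.

Lemma one_mx2 : (1 : 'M[C]_2) = mx2 1 0 0 1.
Proof.
apply/matrixP => i j; rewrite !mxE.
by case: i => [[|[|]]] // ? ; case: j => [[|[|]]] // ? /=.
Qed.

Lemma scalar_mx2 k : (k%:M : 'M[C]_2) = mx2 k 0 0 k.
Proof.
apply/matrixP => i j; rewrite !mxE.
by case: i => [[|[|]]] // ? ; case: j => [[|[|]]] // ? /=.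
Qed.

Lemma adjm_mx2 a b c d : adjm (mx2 a b c d) = mx2 a^* c^* b^* d^*.
Proof.
apply/matrixP => i j; rewrite !mxE.
by case: i => [[|[|]]] // ? ; case: j => [[|[|]]] // ? /=.
Qed.

Lemma inv_mx2 a b c d : a * d - b * c = 1 -> invmx (mx2 a b c d) = mx2 d (-b) (-c) a.
Proof.
move=> h1.
have hu : mx2 a b c d \in unitmx by rewrite unitmxE det_mx2 h1 unitr1.
have e : mx2 a b c d *m mx2 d (-b) (-c) a = 1%:M.
  have h1' : a * d = b * c + 1 by rewrite -h1; ring.
  by rewrite mulmx2 scalar_mx2; apply: mx2P; ring: h1'.
by rewrite -[RHS](mulKmx hu) e mulmx1.
Qed.

Lemma mform_mx2 a b c d e f g h :
  mform (mx2 a b c d) (mx2 e f g h) = (a*h + e*d - b*g - c*f) / 2.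
Proof. rewrite /mform add_mx2 !det_mx2; congr (_ / _); ring. Qed.


End M2.
Section Consts.
Variable R : realType.
Definition w5 : R := Num.sqrt 5.
Definition qq : R := Num.sqrt ((1 + w5) / 2).
Definition r2 : R := Num.sqrt 2.

Lemma w5_sq : w5 ^+ 2 = 5. Proof. by rewrite sqr_sqrtr // ler0n. Qed.
Lemma w5_gt0 : 0 < w5. Proof. by rewrite sqrtr_gt0 ltr0n. Qed.
Lemma w5_bnd : 2 < w5 < 3.
Proof. have h := w5_sq; have h0 := w5_gt0. apply/andP; split; nra. Qed.
Lemma r2_sq : r2 ^+ 2 = 2. Proof. by rewrite sqr_sqrtr // ler0n. Qed.
Lemma r2_gt0 : 0 < r2. Proof. by rewrite sqrtr_gt0 ltr0n. Qed.
Lemma qq_sq : qq ^+ 2 = (1 + w5) / 2.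
Proof. rewrite sqr_sqrtr //; have := w5_gt0; lra. Qed.
Lemma qq_gt0 : 0 < qq.
Proof. rewrite sqrtr_gt0; have := w5_gt0; lra. Qed.
Lemma qq4 : qq ^+ 4 = qq ^+ 2 + 1.
Proof. have e : qq ^+ 4 = (qq ^+ 2) ^+ 2 by rewrite -exprM. rewrite e qq_sq.
have h := w5_sq. by field: h. Qed.
Lemma qq_bnd : 1 < qq < 3/2.
Proof. have h := qq_sq; have h0 := qq_gt0; have := w5_bnd => /andP [h1 h2].
apply/andP; split; nra. Qed.

Lemma s_val_eq : s_val R = qq ^+ 2 - qq ^+ 3 + qq.
Proof.
have hw : w5 = 2 * qq ^+ 2 - 1 by rewrite qq_sq; field.
have e1 : 2 * (1 + Num.sqrt 5) = (2 * qq) ^+ 2 :> R.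
  by rewrite -/w5 hw; ring.
rewrite /s_val e1 sqrtr_sqr ger0_norm; last by have := qq_gt0; lra.
have e2 : 1 + Num.sqrt 5 - 2 * qq = (qq ^+ 2 - qq ^+ 3 + qq) ^+ 2 :> R.
  by rewrite -/w5 hw; have h4 := qq4; ring: h4.
rewrite e2 sqrtr_sqr ger0_norm //.
have := qq_bnd => /andP [h1 h2]. nra.
Qed.
End Consts.
Section Trig.
Variable R : realType.

Lemma cos_pos_frac (k : R) : 2 < k -> 0 < cos (pi / k).
Proof.
move=> hk; apply: cos_gt0_pihalf; have hp := pi_gt0 R.
have h1 : 0 < pi / k by apply: divr_gt0 => //; lra.
apply/andP; split; first lra.
rewrite ltr_pM2l // ltf_pV2 ?posrE //; lra.
Qed.

Lemma cos5 (x : R) : cos (x + x + x + x + x) =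
  16 * cos x ^+ 5 - 20 * cos x ^+ 3 + 5 * cos x.
Proof.
have hs := sin2cos2 x.
rewrite !(cosD, sinD). ring: hs.
Qed.

Lemma cos3 (x : R) : cos (x + x + x) = 4 * cos x ^+ 3 - 3 * cos x.
Proof.
have hs := sin2cos2 x.
rewrite !(cosD, sinD). ring: hs.
Qed.

Lemma cos_pi5 : cos (pi / 5) = (1 + Num.sqrt 5) / 4 :> R.
Proof.
set c := cos (pi / 5).
have hc : 0 < c by apply: cos_pos_frac; lra.
have e : pi = pi / 5 + pi / 5 + pi / 5 + pi / 5 + pi / 5 :> R by field.
have h := cospi R; rewrite e cos5 -/c in h.
have h2 : (c + 1) * (4 * c ^+ 2 - 2 * c - 1) ^+ 2 = 0.
  rewrite -[RHS](subrr (-1)); rewrite -[in X in _ = X - _]h; ring.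
move/eqP: h2; rewrite mulf_eq0 expf_eq0 /= => /orP [h3|h3]; first by move/eqP: h3; lra.
have w5s : Num.sqrt 5 ^+ 2 = 5 :> R by rewrite sqr_sqrtr // ler0n.
have w5p : 0 < Num.sqrt 5 :> R by rewrite sqrtr_gt0 ltr0n.
have h4 : (4 * c - 1 - Num.sqrt 5) * (4 * c - 1 + Num.sqrt 5) = 0.
  move/eqP: h3 => h3. rewrite -[RHS](mulr0 4) -h3. ring: w5s.
have w51 : 1 < Num.sqrt 5 :> R by nra.
move/eqP: h4; rewrite mulf_eq0 => /orP [/eqP h5|/eqP h5]; lra.
Qed.

Lemma cos_pi3 : cos (pi / 3) = 1 / 2 :> R.
Proof.
set c := cos (pi / 3).
have hc : 0 < c by apply: cos_pos_frac; lra.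
have e : pi = pi / 3 + pi / 3 + pi / 3 :> R by field.
have h := cospi R; rewrite e cos3 -/c in h.
have h2 : (c + 1) * (2 * c - 1) ^+ 2 = 0.
  rewrite -[RHS](subrr (-1)); rewrite -[in X in _ = X - _]h; ring.
move/eqP: h2; rewrite mulf_eq0 expf_eq0 /= => /orP [/eqP h3|/eqP h3]; lra.
Qed.

Lemma cos_pi4 : cos (pi / 4) = Num.sqrt 2 / 2 :> R.
Proof.
set c := cos (pi / 4).
have hc : 0 < c by apply: cos_pos_frac; lra.
have e : pi / 2 = pi / 4 + pi / 4 :> R by field.
have h := cos_pihalf R; rewrite e cosD -/c in h.
have hs := sin2cos2 (pi / 4 : R).
have r2s : Num.sqrt 2 ^+ 2 = 2 :> R by rewrite sqr_sqrtr // ler0n.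
have r2p : 0 < Num.sqrt 2 :> R by rewrite sqrtr_gt0 ltr0n.
have h4 : (c - Num.sqrt 2 / 2) * (c + Num.sqrt 2 / 2) = 0.
  rewrite -[RHS](mulr0 (1/2)) -h /c. by field: hs r2s.
move/eqP: h4; rewrite mulf_eq0 => /orP [/eqP h5|/eqP h5]; lra.
Qed.

Lemma cos_pi2 : cos (pi / 2) = 0 :> R.
Proof. exact: cos_pihalf. Qed.

End Trig.

Section Mats.
Variable R : realType.
Local Notation C := R[i].
Definition Q : C := (qq R)%:C.
Definition S2 : C := (r2 R)%:C.
Lemma hQ : Q ^+ 4 = Q ^+ 2 + 1.
Proof. by rewrite /Q -rmorphXn qq4 rmorphD rmorphXn rmorph1. Qed.
Lemma hS : S2 ^+ 2 = 2.
Proof. by rewrite /S2 -rmorphXn r2_sq rmorph_nat. Qed.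
Definition ii : C := 'i.
Lemma hI : ii * ii = -1.
Proof. apply/eqP; rewrite eq_complex /=; apply/andP; split; apply/eqP; ring. Qed.

Definition adj2 (A : 'M[C]_2) := mx2 (A 1 1) (- A 0 1) (- A 1 0) (A 0 0).
Lemma adj2_mx2 a b c d : adj2 (mx2 a b c d) = mx2 d (-b) (-c) a.
Proof. by rewrite /adj2 mx2_00 mx2_01 mx2_10 mx2_11. Qed.

Definition hh : C := S2 / 2.
Definition pp : C := Q ^+ 3 - Q.
Definition nn (k : 'I_4) : 'M[C]_2 :=
  match val k with
  | 0 => mx2 (-(hh*pp)) (-(Q^+2*hh)) (-(Q^+2*hh)) (-(hh*pp))
  | 1 => mx2 (-hh) hh hh hh
  | 2 => mx2 hh (ii*hh) (-(ii*hh)) (-hh)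
  | _ => mx2 0 (-ii) ii 0
  end.
Definition LL (a b : 'I_4) := nn a *m adj2 (nn b).

Definition i0 : 'I_4 := @Ordinal 4 0 isT.
Definition i1 : 'I_4 := @Ordinal 4 1 isT.
Definition i2 : 'I_4 := @Ordinal 4 2 isT.
Definition i3 : 'I_4 := @Ordinal 4 3 isT.

Lemma s_valC : (s_val R)%:C = Q ^+ 2 - Q ^+ 3 + Q.
Proof. by rewrite s_val_eq /Q rmorphD rmorphB !rmorphXn. Qed.

Lemma sinvC : ((- s_val R)^-1)%:C = - (Q ^+ 2 + Q ^+ 3 - Q) / 2.
Proof.
have e : (- s_val R)^-1 = - (qq R ^+ 2 + qq R ^+ 3 - qq R) / 2.
  apply: mulr1_eq; rewrite s_val_eq. have h4 := qq4 R. by field: h4.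
by rewrite e /Q; field.
Qed.

Lemma g02_LL : g02 R = - LL i0 i1.
Proof.
have e1 : (- (s_val R / 2))%:C = - (Q ^+ 2 - Q ^+ 3 + Q) / 2.
  by rewrite s_val_eq /Q; field.
have e2 : (s_val R / 2)%:C = (Q ^+ 2 - Q ^+ 3 + Q) / 2.
  by rewrite s_val_eq /Q; field.
rewrite /g02 e1 e2 sinvC /LL /nn /= adj2_mx2 mulmx2 opp_mx2 /hh /pp.
have h1 := hQ; have h2 := hS; have h3 := hI.
by apply: mx2P; field: h1 h2 h3.
Qed.


Lemma j0_mx2 : j0 R = mx2 hh (-hh) hh hh.
Proof.
have e : (Num.sqrt 2 : R)^-1 = r2 R / 2.
  apply: mulr1_eq; have h := r2_sq R; rewrite /r2 in h *; by field: h.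
rewrite /j0 e scale_mx2 /hh /S2; by apply: mx2P; field.
Qed.

Lemma j0_LL : j0 R = - (LL i1 i2 *m LL i1 i2 *m LL i3 i2 *m LL i1 i2).
Proof.
rewrite j0_mx2 /LL /nn /= !adj2_mx2 !mulmx2 opp_mx2 /hh.
have h1 := hQ; have h2 := hS; have h3 := hI.
by apply: mx2P; field: h1 h2 h3.
Qed.
Lemma g02_mx2 : g02 R = mx2 (- (Q ^+ 2 - Q ^+ 3 + Q) / 2) (- (Q ^+ 2 + Q ^+ 3 - Q) / 2)
   ((Q ^+ 2 - Q ^+ 3 + Q) / 2) (- (Q ^+ 2 + Q ^+ 3 - Q) / 2).
Proof.
have e1 : (- (s_val R / 2))%:C = - (Q ^+ 2 - Q ^+ 3 + Q) / 2.
  by rewrite s_val_eq /Q; field.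
have e2 : (s_val R / 2)%:C = (Q ^+ 2 - Q ^+ 3 + Q) / 2.
  by rewrite s_val_eq /Q; field.
by rewrite /g02 e1 e2 sinvC.
Qed.

Lemma invj0 : invmx (j0 R) = mx2 hh hh (-hh) hh.
Proof.
rewrite j0_mx2 inv_mx2 ?opprK //. rewrite /hh. have h := hS. by field: h.
Qed.

Lemma JmatS k : Jmat R k.+2 = j0 R *m Jmat R k.+1 *m invmx (j0 R).
Proof. by rewrite /Jmat iterS. Qed.

Definition J1e := mx2 ((1+Q-Q^+2)/2) (-(1+Q+Q^+2)/2) ((1-Q+Q^+2)/2) ((1-Q-Q^+2)/2).
Definition J2e := mx2 ((1+Q-Q^+2)/2) ((-1+Q-Q^+2)/2) ((1+Q+Q^+2)/2) ((1-Q-Q^+2)/2).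
Definition J3e := mx2 ((1-Q-Q^+2)/2) ((-1+Q-Q^+2)/2) ((1+Q+Q^+2)/2) ((1+Q-Q^+2)/2).
Definition J4e := mx2 ((1-Q-Q^+2)/2) (-(1+Q+Q^+2)/2) ((1-Q+Q^+2)/2) ((1+Q-Q^+2)/2).

Lemma J1_eq : Jmat R 1 = J1e.
Proof.
rewrite /Jmat /= g02_mx2 mulmx2 opp_mx2 /J1e. have h := hQ.
by apply: mx2P; field: h.
Qed.
Lemma J2_eq : Jmat R 2 = J2e.
Proof.
rewrite JmatS J1_eq invj0 j0_mx2 !mulmx2 /J1e /J2e /hh. have h := hQ; have h2 := hS.
by apply: mx2P; field: h h2.
Qed.
Lemma J3_eq : Jmat R 3 = J3e.
Proof.
rewrite JmatS J2_eq invj0 j0_mx2 !mulmx2 /J3e /J2e /hh. have h := hQ; have h2 := hS.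
by apply: mx2P; field: h h2.
Qed.
Lemma J4_eq : Jmat R 4 = J4e.
Proof.
rewrite JmatS J3_eq invj0 j0_mx2 !mulmx2 /J3e /J4e /hh. have h := hQ; have h2 := hS.
by apply: mx2P; field: h h2.
Qed.

Lemma prod_J : Jmat R 4 *m Jmat R 3 *m Jmat R 2 *m Jmat R 1 = 1.
Proof.
rewrite J1_eq J2_eq J3_eq J4_eq /J1e /J2e /J3e /J4e !mulmx2 one_mx2. have h := hQ.
by apply: mx2P; field: h.
Qed.
End Mats.

Section Gen.
Variable R : realType.
Local Notation C := R[i].
Arguments adj2 {R}. Arguments LL {R}. Arguments nn {R}. Arguments hh {R}. Arguments pp {R}. Arguments Q {R}. Arguments S2 {R}. Arguments ii {R}.
Lemma adj2_mul (A B : 'M[C]_2) : adj2 (A *m B) = adj2 B *m adj2 A.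
Proof.
rewrite (@mx2_eta _ A) (@mx2_eta _ B) mulmx2 !adj2_mx2 mulmx2.
by apply: mx2P; ring.
Qed.

Lemma adj2K (A : 'M[C]_2) : adj2 (adj2 A) = A.
Proof. by rewrite (@mx2_eta _ A) !adj2_mx2 !opprK. Qed.

Lemma adjm_mul (A B : 'M[C]_2) : adjm (A *m B) = adjm B *m adjm A.
Proof.
rewrite (@mx2_eta _ A) (@mx2_eta _ B) mulmx2 !adjm_mx2 mulmx2.
by apply: mx2P; ring.
Qed.

Lemma adjm_adj2 (A : 'M[C]_2) : adjm (adj2 A) = adj2 (adjm A).
Proof. by rewrite (@mx2_eta _ A) !adj2_mx2 !adjm_mx2 adj2_mx2 !rmorphN. Qed.

Lemma adjm_opp (A : 'M[C]_2) : adjm (- A) = - adjm A.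
Proof. by rewrite (@mx2_eta _ A) opp_mx2 !adjm_mx2 opp_mx2 !rmorphN. Qed.

Lemma adjm1 : adjm (1 : 'M[C]_2) = 1.
Proof. by rewrite one_mx2 adjm_mx2 rmorph0 rmorph1. Qed.

Lemma mform_self (X : 'M[C]_2) : mform X X = \det X.
Proof. by rewrite (@mx2_eta _ X) mform_mx2 det_mx2; field. Qed.

Lemma mrefl_adj (n X : 'M[C]_2) : \det n = -1 -> mrefl n X = n *m adj2 X *m n.
Proof.
move=> hn; rewrite /mrefl mform_self hn.
move: hn; rewrite (@mx2_eta _ n) (@mx2_eta _ X) det_mx2 mform_mx2 adj2_mx2 !mulmx2 scale_mx2 opp_mx2 add_mx2.
move=> hn.
have hn' : n 0 0 * n 1 1 = n 0 1 * n 1 0 - 1 by rewrite -hn; ring.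
by apply: mx2P; field: hn'.
Qed.

Definition act (A X : 'M[C]_2) := A *m X *m adjm A.

Lemma act_pair (na nb X : 'M[C]_2) : adjm na = na -> adjm nb = nb ->
  \det na = -1 -> \det nb = -1 ->
  act (na *m adj2 nb) X = mrefl na (mrefl nb X).
Proof.
move=> ha hb da db; rewrite /act (@mrefl_adj nb X) // (@mrefl_adj na) //.
rewrite adjm_mul adjm_adj2 ha hb !adj2_mul adj2K.
by rewrite !mulmxA.
Qed.

Lemma act_opp A X : act (- A) X = act A X.
Proof. by rewrite /act adjm_opp !mulNmx !mulmxN opprK. Qed.

Lemma act_mul A B X : act (A *m B) X = act A (act B X).
Proof. by rewrite /act adjm_mul !mulmxA. Qed.

End Gen.

Section Gam.
Variable R : realType.
Local Notation C := R[i].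
Arguments adj2 {R}. Arguments LL {R}. Arguments nn {R}. Arguments hh {R}. Arguments pp {R}. Arguments Q {R}. Arguments S2 {R}. Arguments ii {R}. Arguments act {R}.

Lemma hQc : (Q : C)^* = Q. Proof. exact: conjc_real. Qed.
Lemma hSc : (S2 : C)^* = S2. Proof. exact: conjc_real. Qed.
Lemma hIc : (ii : C)^* = - ii.
Proof. by apply/eqP; rewrite eq_complex /= oppr0 !eqxx. Qed.

Lemma nn_herm k : adjm (nn k : 'M[C]_2) = nn k.
Proof.
have h1 := hQc; have h2 := hSc; have h3 := hIc.
case: k => [[|[|[|[|k]]]] hk] //; rewrite /nn /= adjm_mx2 /hh /pp;
by apply: mx2P; field: h1 h2 h3.
Qed.

Lemma nn_det k : \det (nn k : 'M[C]_2) = -1.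
Proof.
have h1 := hQ R; have h2 := hS R; have h3 := hI R.
case: k => [[|[|[|[|k]]]] hk] //; rewrite /nn /= det_mx2 /hh /pp;
by field: h1 h2 h3.
Qed.

Lemma cos_pi5' : cos (pi / 5) = qq R ^+ 2 / 2.
Proof. by rewrite cos_pi5 qq_sq -/(w5 R); field. Qed.

Lemma tetra : tetra_normals (nn : 'I_4 -> 'M[C]_2).
Proof.
split; first by move=> i; split; [exact: nn_herm | exact: nn_det].
have h1 := hQ R; have h2 := hS R; have h3 := hI R.
move=> [[|[|[|[|i]]]] hi] // [[|[|[|[|j]]]] hj] // hij;
  rewrite /cox_m /= ?cos_pi5' ?cos_pi3 ?cos_pi4 ?cos_pi2 /nn /= mform_mx2 /hh /pp;
  try (by move: hij; rewrite eqxx).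
all: rewrite /Q /S2 in h1 h2 *.
all: by field: h1 h2 h3.
Qed.

End Gam.

Section Words.
Variable R : realType.
Local Notation C := R[i].
Arguments adj2 {R}. Arguments LL {R}. Arguments nn {R}. Arguments hh {R}. Arguments pp {R}. Arguments Q {R}. Arguments S2 {R}. Arguments ii {R}. Arguments act {R}.

Definition liftw (ps : seq ('I_4 * 'I_4)) : 'M[C]_2 :=
  foldr (fun p M => LL p.1 p.2 *m M) 1%:M ps.
Definition flatw (ps : seq ('I_4 * 'I_4)) : seq 'I_4 :=
  flatten [seq [:: p.1; p.2] | p <- ps].

Lemma size_flatw ps : size (flatw ps) = (size ps).*2.
Proof. by elim: ps => //= p ps IH; rewrite IH doubleS. Qed.

Lemma liftw_cat s1 s2 : liftw (s1 ++ s2) = liftw s1 *m liftw s2.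
Proof. elim: s1 => [|p s1 IH] /=; first by rewrite mul1mx. by rewrite IH mulmxA. Qed.

Lemma act_liftw ps X : act (liftw ps) X = foldr (fun i Y => mrefl (nn i) Y) X (flatw ps).
Proof.
elim: ps => [|[a b] ps IH] /=.
  by rewrite /act mul1mx adjm1 mulmx1.
rewrite act_mul IH /LL act_pair ?nn_herm ?nn_det //.
Qed.

Definition inG (A : 'M[C]_2) := exists ps, A = liftw ps \/ A = - liftw ps.

Lemma inG_act A : inG A -> in_rot_coxeter nn (fun X => A *m X *m adjm A).
Proof.
move=> [ps hA]; exists (flatw ps); split.
  by rewrite size_flatw odd_double.
move=> X _; rewrite -/(act A X).
by case: hA => ->; rewrite ?act_opp act_liftw.
Qed.

Lemma inG_mul A B : inG A -> inG B -> inG (A *m B).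
Proof.
move=> [p1 h1] [p2 h2]; exists (p1 ++ p2); rewrite liftw_cat.
by case: h1 => ->; case: h2 => ->; rewrite ?mulNmx ?mulmxN ?opprK; auto.
Qed.

Lemma inG_opp A : inG A -> inG (- A).
Proof. by move=> [p h]; exists p; case: h => ->; rewrite ?opprK; auto. Qed.

Definition pj := [:: (i1, i2); (i1, i2); (i3, i2); (i1, i2)].
Definition pji := [:: (i2, i1); (i2, i3); (i2, i1); (i2, i1)].

Lemma j0_inG : inG (j0 R).
Proof. exists pj; right; rewrite j0_LL /liftw /= mulmx1 !mulmxA //. Qed.

Lemma invj0_inG : inG (invmx (j0 R)).
Proof.
exists pji; right; rewrite invj0 /liftw /= mulmx1 /LL /nn /= !adj2_mx2 !mulmx2 opp_mx2 /hh.
have h1 := hQ R; have h2 := hS R; have h3 := hI R.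
by apply: mx2P; field: h1 h2 h3.
Qed.

Lemma g02_inG : inG (g02 R).
Proof. by exists [:: (i0, i1)]; right; rewrite g02_LL /liftw /= mulmx1. Qed.

Lemma Jmat_inG k : inG (Jmat R k.+1).
Proof.
elim: k => [|k IH].
  by rewrite /Jmat /=; apply: inG_opp; apply: inG_mul; apply: g02_inG.
by rewrite JmatS; apply: inG_mul; [apply: inG_mul|]; [apply: j0_inG|apply: IH|apply: invj0_inG].
Qed.

End Words.

Section Gen2.
Variable R : realType.
Local Notation C := R[i].
Arguments adj2 {R}.

Lemma adj2_mulK (A : 'M[C]_2) : adj2 A *m A = (\det A)%:M.
Proof. rewrite (@mx2_eta _ A) adj2_mx2 mulmx2 det_mx2 scalar_mx2; by apply: mx2P; ring. Qed.

Lemma det_adj2 (A : 'M[C]_2) : \det (adj2 A) = \det A.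
Proof. by rewrite (@mx2_eta _ A) adj2_mx2 !det_mx2; ring. Qed.

Lemma det_sub1 (A : 'M[C]_2) : \det (A - 1) = \det A - \tr A + 1.
Proof. rewrite (@mx2_eta _ A) one_mx2 opp_mx2 add_mx2 !det_mx2 tr_mx2; ring. Qed.

Lemma eig_adj (A : 'M[C]_2) (v : 'cV[C]_2) a : \det A = 1 -> v != 0 ->
  A *m v = a *: v -> a != 0 /\ a *: (adj2 A *m v) = v.
Proof.
move=> dA nv hv.
have e : adj2 A *m (A *m v) = v by rewrite mulmxA adj2_mulK dA mul1mx.
split.
  apply/negP => /eqP a0; move: hv; rewrite a0 scale0r => hv.
  by move: e; rewrite hv mulmx0 => e; move: nv; rewrite -e eqxx.
by move: e; rewrite hv scalemxAr.
Qed.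

Lemma common_eig_tr (A B : 'M[C]_2) (v : 'cV[C]_2) a b :
  \det A = 1 -> \det B = 1 -> v != 0 -> A *m v = a *: v -> B *m v = b *: v ->
  \tr (A *m B *m adj2 A *m adj2 B) = 2.
Proof.
move=> dA dB nv hA hB.
have [a0 eA] := @eig_adj A v a dA nv hA.
have [b0 eB] := @eig_adj B v b dB nv hB.
set M := A *m B *m adj2 A *m adj2 B.
have eA2 : adj2 A *m v = a^-1 *: v by rewrite -[in RHS]eA scalerA mulVf ?scale1r.
have eB2 : adj2 B *m v = b^-1 *: v by rewrite -[in RHS]eB scalerA mulVf ?scale1r.
have hM : M *m v = v.
  rewrite /M -!mulmxA eB2 -!scalemxAr eA2 -!scalemxAr hB -!scalemxAr hA !scalerA.
  have -> : b^-1 / a * b * a = 1 by field; rewrite ?a0 ?b0.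
  by rewrite scale1r.
have h0 : (M - 1) *m v = 0 by rewrite mulmxBl mul1mx hM subrr.
have hd : \det (M - 1) = 0.
  have : adj2 (M - 1) *m ((M - 1) *m v) = 0 by rewrite h0 mulmx0.
  rewrite mulmxA adj2_mulK mul_scalar_mx => /eqP; rewrite scaler_eq0 (negbTE nv) orbF.
  by move/eqP.
have dM : \det M = 1 by rewrite /M !det_mulmx !det_adj2 dA dB !mulr1.
move: hd; rewrite det_sub1 dM => hd.
clearbody M. have e : \tr M = 2 - (1 - \tr M + 1) by ring. by rewrite e hd subr0.
Qed.

Lemma diag2 (a b c d l m : C) : a * d - b * c = 1 -> a + d = l + m -> l * m = 1 ->
  b != 0 -> m - l != 0 ->
  exists P : 'M[C]_2, \det P = 1 /\ mx2 a b c d = P *m mx2 l 0 0 m *m invmx P.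
Proof.
move=> h1 h2 h3 hb hml.
have hd : d = l + m - a by rewrite -h2; ring.
subst d.
have hbc : b * c = a * (l + m - a) - 1 by rewrite -h1; ring.
set P := mx2 b (1 / (m - l)) (l - a) ((m - a) / (b * (m - l))).
have dP : \det P = 1 by rewrite det_mx2; field; rewrite ?hb ?hml.
exists P; split => //.
have hu : P \in unitmx by rewrite unitmxE dP unitr1.
have e : mx2 a b c (l + m - a) *m P = P *m mx2 l 0 0 m.
  rewrite /P !mulmx2; apply: mx2P.
  - by ring.
  - by field: hbc h3; rewrite ?hb ?hml.
  - by ring: hbc h3.
  - by field: hbc h3; rewrite ?hb ?hml.
by rewrite -e (mulmxK hu).
Qed.

Lemma order10 (a b c d t : C) : a * d - b * c = 1 -> a + d = t -> t ^+ 2 = t + 1 ->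
  b != 0 -> t != 0 -> mx_order (mx2 a b c d) 10.
Proof.
move=> h1 h2 ht hb ht0.
have hd : d = t - a by rewrite -h2; ring.
subst d.
have hbc : b * c = a * (t - a) - 1 by rewrite -h1; ring.
set M := mx2 a b c (t - a).
have M5 : M ^+ 5 = -1.
  rewrite /M !exprS expr0 mulr1 !mulr2x one_mx2 opp_mx2.
  by apply: mx2P; ring: hbc ht.
have P1 : (M ^+ 1) 0 1 = b by rewrite expr1 mx2_01.
have P2 : (M ^+ 2) 0 1 = t * b by rewrite /M !exprS expr0 mulr1 !mulr2x mx2_01; ring: hbc ht.
have P3 : (M ^+ 3) 0 1 = t * b by rewrite /M !exprS expr0 mulr1 !mulr2x mx2_01; ring: hbc ht.
have P4 : (M ^+ 4) 0 1 = b by rewrite /M !exprS expr0 mulr1 !mulr2x mx2_01; ring: hbc ht.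
have E j : M ^+ (j + 5) = - M ^+ j by rewrite exprD M5 mulrN1.
have N j : (M ^+ j) 0 1 != 0 -> M ^+ j != 1 /\ M ^+ (j + 5) != 1.
  move=> hj; split; apply/eqP => e.
    by move: hj; rewrite e one_mx2 mx2_01 eqxx.
  have F : (M ^+ (j + 5)) 0 1 = - (M ^+ j) 0 1 by rewrite E mxE.
  by move: hj; rewrite -oppr_eq0 -F e one_mx2 mx2_01 eqxx.
have tb : t * b != 0 by rewrite mulf_neq0.
split => //; split.
  have -> : (10 = 5 + 5)%N by []. by rewrite exprD M5 mulrNN mulr1.
move=> [|[|[|[|[|[|[|[|[|[|m]]]]]]]]]] // _.
- by case: (N 1%N); rewrite ?P1.
- by case: (N 2%N); rewrite ?P2.
- by case: (N 3%N); rewrite ?P3.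
- by case: (N 4%N); rewrite ?P4.
- rewrite M5; apply/eqP => e; have := congr1 (fun A : 'M[C]_2 => A 0 0) e.
  rewrite one_mx2 opp_mx2 !mx2_00 => e'; have := congr1 (fun z : C => let: x +i* _ := z in x) e'; rewrite /=; lra.
- by case: (N 1%N); rewrite ?P1.
- by case: (N 2%N); rewrite ?P2.
- by case: (N 3%N); rewrite ?P3.
- by case: (N 4%N); rewrite ?P4.
Qed.

End Gen2.

Section Fin.
Variable R : realType.
Local Notation C := R[i].
Arguments adj2 {R}. Arguments LL {R}. Arguments nn {R}. Arguments hh {R}. Arguments pp {R}. Arguments Q {R}. Arguments S2 {R}. Arguments ii {R}. Arguments act {R}.
Arguments J1e {R}. Arguments J2e {R}. Arguments J3e {R}. Arguments J4e {R}.

Local Notation u := (qq R).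

Lemma Jprops k : idx4 k -> exists (a b c d : R),
  Jmat R k = mx2 a%:C b%:C c%:C d%:C /\ a * d - b * c = 1 /\ a + d = 1 - u ^+ 2 /\ b < 0.
Proof.
have h4 := qq4 R; have hb := qq_bnd R.
move: hb => /andP [hb1 hb2].
case/andP; case: k => [|[|[|[|[|k]]]]] // _ _.
- exists ((1+u-u^+2)/2), (-(1+u+u^+2)/2), ((1-u+u^+2)/2), ((1-u-u^+2)/2).
  split; first by rewrite J1_eq /J1e /Q; apply: mx2P; field.
  split; first by field: h4.
  split; first by field.
  nra.
- exists ((1+u-u^+2)/2), ((-1+u-u^+2)/2), ((1+u+u^+2)/2), ((1-u-u^+2)/2).
  split; first by rewrite J2_eq /J2e /Q; apply: mx2P; field.
  split; first by field: h4.
  split; first by field.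
  nra.
- exists ((1-u-u^+2)/2), ((-1+u-u^+2)/2), ((1+u+u^+2)/2), ((1+u-u^+2)/2).
  split; first by rewrite J3_eq /J3e /Q; apply: mx2P; field.
  split; first by field: h4.
  split; first by field.
  nra.
- exists ((1-u-u^+2)/2), (-(1+u+u^+2)/2), ((1-u+u^+2)/2), ((1+u-u^+2)/2).
  split; first by rewrite J4_eq /J4e /Q; apply: mx2P; field.
  split; first by field: h4.
  split; first by field.
  nra.
Qed.

Lemma realC_neq0 (x : R) : x != 0 -> x%:C != 0.
Proof. by move=> h; apply/eqP => -[e]; move/eqP: h. Qed.

Lemma detJ k : idx4 k -> \det (Jmat R k) = 1.
Proof.
move=> /Jprops [a [b [c [d [-> [h _]]]]]].
by rewrite det_mx2 -!rmorphM -rmorphB h rmorph1.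
Qed.

Lemma ImC (x : R) : 'Im (x%:C) = 0.
Proof.
apply/Creal_ImP; rewrite realE ler0c.
have -> : (x%:C <= 0) = (x <= 0) by rewrite -(lecR x 0).
exact: le_total.
Qed.

Lemma realJ k : idx4 k -> real_mx (Jmat R k).
Proof.
move=> /Jprops [a [b [c [d [-> _]]]]] i j; rewrite /mx2 mxE.
by case: ifP => _; case: ifP => _; rewrite ImC.
Qed.

Lemma orderJ k : idx4 k -> mx_order (Jmat R k) 10.
Proof.
move=> /Jprops [a [b [c [d [-> [h1 [h2 h3]]]]]]].
have hb := qq_bnd R; move: hb => /andP [hb1 hb2].
have h4 := qq4 R.
apply: (@order10 _ _ _ _ _ ((1 - u ^+ 2)%:C)).
- by rewrite -!rmorphM -rmorphB h1 rmorph1.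
- by rewrite -rmorphD h2.
- have h := hQ R; rewrite /Q in h; by ring: h.
- by apply: realC_neq0; rewrite lt_eqF.
- by apply: realC_neq0; apply/eqP => e; nra.
Qed.

Lemma hQr : (u%:C) ^+ 4 = (u%:C) ^+ 2 + 1 :> C.
Proof. by have h := hQ R; rewrite /Q in h. Qed.

Lemma trJ12 : \tr (Jmat R 1 *m Jmat R 2) = (-2 * u ^+ 2)%:C.
Proof. have h := hQr. by rewrite J1_eq J2_eq /J1e /J2e mulmx2 tr_mx2 /Q; field: h. Qed.
Lemma trJ23 : \tr (Jmat R 2 *m Jmat R 3) = (-2 * u ^+ 2)%:C.
Proof. have h := hQr. by rewrite J3_eq J2_eq /J3e /J2e mulmx2 tr_mx2 /Q; field: h. Qed.
Lemma trJ13 : \tr (Jmat R 1 *m Jmat R 3) = (-3 * u ^+ 2)%:C.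
Proof. have h := hQr. by rewrite J1_eq J3_eq /J1e /J3e mulmx2 tr_mx2 /Q; field: h. Qed.
Lemma trJ24 : \tr (Jmat R 2 *m Jmat R 4) = (-3 * u ^+ 2)%:C.
Proof. have h := hQr. by rewrite J4_eq J2_eq /J4e /J2e mulmx2 tr_mx2 /Q; field: h. Qed.
Lemma trcomm : \tr (Jmat R 1 *m Jmat R 2 *m adj2 (Jmat R 1) *m adj2 (Jmat R 2)) = (4 + 4 * u ^+ 2)%:C.
Proof.
have h := hQr.
by rewrite J1_eq J2_eq /J1e /J2e !adj2_mx2 !mulmx2 tr_mx2 /Q; field: h.
Qed.

Lemma ltm2 (x : R) : x < -2 -> x%:C < -2.
Proof.
move=> hx; have -> : (-2 : C) = (-2 : R)%:C by rewrite rmorphN rmorph_nat.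
by rewrite ltcR.
Qed.

Lemma irrJ : irreducible4 (Jmat R).
Proof.
move=> [v [nv hv]].
have [l1 e1] := hv 1%N isT. have [l2 e2] := hv 2%N isT.
have := @common_eig_tr R (Jmat R 1) (Jmat R 2) v l1 l2 (@detJ 1%N isT) (@detJ 2%N isT) nv e1 e2.
rewrite trcomm.
have -> : (2 : C) = (2 : R)%:C by rewrite rmorph_nat.
move=> -[e]; have hb := qq_bnd R; move: hb => /andP [hb1 hb2]; clear -e hb1; nra.
Qed.

Definition th : R := 2 * pi * (3 / 10).

Lemma cos_th : cos th = (1 - u ^+ 2) / 2.
Proof.
have e : th = pi - (pi / 5 + pi / 5) by rewrite /th; field.
rewrite e cosB cospi sinpi cosD cos_pi5'.
have hs := sin2cos2 (pi / 5 : R). rewrite cos_pi5' in hs.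
have h4 := qq4 R.
have hs2 : sin (pi / 5) * sin (pi / 5) = 1 - (u ^+ 2 / 2) ^+ 2 :> R by rewrite -expr2 hs.
rewrite hs2; by field: h4.
Qed.

Lemma sin_th : 0 < sin th.
Proof. apply: sin_gt0_pi; have hp := pi_gt0 R; rewrite /th; apply/andP; split; lra. Qed.

Lemma expi_eq (t : R) : expi t = (cos t)%:C + (sin t)%:C * ii.
Proof. rewrite /expi /ii; apply/eqP; rewrite eq_complex /=; apply/andP; split; apply/eqP; ring. Qed.

Lemma symJ : RSR_symmetric (Jmat R).
Proof.
exists (3 / 10); split; first by apply/andP; split; lra.
move=> k /Jprops [a [b [c [d [-> [h1 [h2 h3]]]]]]].
rewrite -/th.
have hI := hI R.
have hcs : ((sin th)%:C) ^+ 2 = 1 - ((cos th)%:C) ^+ 2 :> C.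
  by rewrite -!rmorphXn sin2cos2 rmorphB rmorph1.
have st := sin_th.
apply: diag2.
- by rewrite -!rmorphM -rmorphB h1 rmorph1.
- rewrite !expi_eq cosN sinN -rmorphD h2.
  have -> : 1 - u ^+ 2 = cos th + cos th by rewrite cos_th; field.
  by rewrite rmorphN; ring.
- rewrite !expi_eq cosN sinN rmorphN. by ring: hI hcs.
- by apply: realC_neq0; rewrite lt_eqF.
- rewrite subr_eq0 /expi; apply/eqP => -[_ e]; move: e; rewrite sinN; lra.
Qed.

Lemma g02_lift : lift_of_two_reflections nn (g02 R).
Proof.
split.
  have h := hQr; by rewrite g02_mx2 det_mx2 /Q; field: h.
exists i0, i1; split => //.
move=> X _; rewrite -/(act (g02 R) X) g02_LL act_opp /LL act_pair ?nn_herm ?nn_det //.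
Qed.

Theorem main :
  Jmat R 4 *m Jmat R 3 *m Jmat R 2 *m Jmat R 1 = 1 /\
  RSR (Jmat R) /\ has_genus (Jmat R) 4 /\
  exists n : 'I_4 -> 'M[R[i]]_2,
    tetra_normals n /\ lift_of_two_reflections n (g02 R) /\
    forall k, idx4 k -> in_Gamma n (Jmat R k).
Proof.
split; first exact: prod_J.
split.
  split; first exact: irrJ.
  split.
    split; first by move=> k hk; split; [exact: realJ | exact: detJ].
    have hb := qq_bnd R; move: hb => /andP [hb1 hb2].
    rewrite trJ12 trJ23 trJ13; split; [|split]; apply: ltm2; nra.
  split; first exact: symJ.
  by rewrite /RSR_rectangular trJ13 trJ24.
split; first by exists 10%N; split => // j hj; exact: orderJ.
exists nn; split; first exact: tetra.
split; first exact: g02_lift.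
move=> k hk; split; first exact: detJ.
case: k hk => [|k] // _.
exact: inG_act (Jmat_inG R k).
Qed.

End Fin.

Local Close Scope complex_scope.

Theorem theorem6p1 (R : realType) :
  Jmat R 4 *m Jmat R 3 *m Jmat R 2 *m Jmat R 1 = 1 /\
  RSR (Jmat R) /\ has_genus (Jmat R) 4 /\
  exists n : 'I_4 -> 'M[R[i]]_2,
    tetra_normals n /\ lift_of_two_reflections n (g02 R) /\
    forall k, idx4 k -> in_Gamma n (Jmat R k).
Proof. exact: main R. Qed.
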